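(* Assume $r\ge2$, let $F:(\mathbb{R}^n,D)\to(\mathbb{R}^n,D)$ be an $\eta$-quasisymmetric homeomorphism, and write $F(x,y)=(H(x,y),G(y))$ for $x\in\mathbb{R}^{n_1}$, $y\in Y$ (such maps exist since $F$ maps each horizontal leaf $\mathbb{R}^{n_1}\times\{y\}$ onto a horizontal leaf). Suppose there are constants $K\ge1$ and $C>0$ such that (1) $G:(Y,D_Y)\to(Y,D_Y)$ is a $K$-quasisimilarity with constant $C$, and (2) for each $y\in Y$, $H(\cdot,y):\mathbb{R}^{n_1}\to\mathbb{R}^{n_1}$ (Euclidean metric) is a $K$-quasisimilarity with constant $C$. Then $F$ is an $(\eta(1)/\eta^{-1}(1))K$-quasisimilarity (with respect to $D$) with constant $C$.
   Context: Let $n_1,\dots,n_r\ge1$, $n=n_1+\dots+n_r$, $0<\alpha_1<\dots<\alpha_r$. For $x=(x_1,\dots,x_r)\in\mathbb{R}^n=\mathbb{R}^{n_1}\times\dots\times\mathbb{R}^{n_r}$, $D(x,y)=\max\{|x_1-y_1|,|x_2-y_2|^{\alpha_1/\alpha_2},\dots,|x_r-y_r|^{\alpha_1/\alpha_r}\}$. $Y=\mathbb{R}^{n_2}\times\dots\times\mathbb{R}^{n_r}$, $\mathbb{R}^n=\mathbb{R}^{n_1}\times Y$, $D_Y((x_2,\dots,x_r),(x_2',\dots,x_r'))=\max_{2\le i\le r}|x_i-x_i'|^{\alpha_1/\alpha_i}$. $\eta:[0,\infty)\to[0,\infty)$ is a homeomorphism; $f$ is $\eta$-quasisymmetric if $\frac{d(f(x),f(y))}{d(f(x),f(z))}\le\eta(\frac{d(x,y)}{d(x,z)})$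 for distinct $x,y,z$. A bijection $\Phi$ is a $K$-quasisimilarity with constant $C>0$ if $\frac CK d(a,b)\le d(\Phi(a),\Phi(b))\le CK\,d(a,b)$ for all $a,b$. *)

(* Defs.v *)
From HB Require Import structures.
From mathcomp Require Import all_boot all_order all_algebra.
From mathcomp Require Import all_classical all_reals all_analysis.
Set Implicit Arguments. Unset Strict Implicit. Unset Printing Implicit Defensive.
Import Order.TTheory GRing.Theory Num.Theory.
Import numFieldNormedType.Exports.
Local Open Scope ring_scope.
Local Open Scope classical_set_scope.

Section Defs.
Variable R : realType.

Definition enorm (m : nat) (v : 'rV[R]_m) : R := Num.sqrt (\sum_(j < m) v 0 j ^+ 2).

(* A point of R^n = R^{n_1} x ... x R^{n_r}; block i (0-based) lives in R^{ns i} *)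
Definition Pt (r : nat) (ns : nat -> nat) := forall i : 'I_r, 'rV[R]_(ns i).

(* A point of Y = R^{n_2} x ... x R^{n_r}: block j (0-based) is block j+1 of R^n *)
Definition Ypt (r : nat) (ns : nat -> nat) := forall j : 'I_r.-1, 'rV[R]_(ns j.+1).

Lemma ltn_tail (r : nat) (j : 'I_r.-1) : (j.+1 < r)%N.
Proof. by case: r j => [|r] [j hj]. Qed.

Definition tail (r : nat) (ns : nat -> nat) (p : Pt r ns) : Ypt r ns :=
  fun j => p (Ordinal (ltn_tail j)).

(* D(x,y) = max_i |x_i - y_i|^(alpha_1/alpha_i)  (alpha indexed from 0 here) *)
Definition Dist (r : nat) (ns : nat -> nat) (alpha : nat -> R) (p q : Pt r ns) : R :=
  \big[Num.max/0]_(i < r) (enorm (p i - q i)) `^ (alpha 0%N / alpha i).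

Definition DistY (r : nat) (ns : nat -> nat) (alpha : nat -> R) (p q : Ypt r ns) : R :=
  \big[Num.max/0]_(j < r.-1) (enorm (p j - q j)) `^ (alpha 0%N / alpha j.+1).

Definition homeo_halfline (eta : R -> R) : Prop :=
  exists g : R -> R,
    (forall t, 0 <= t -> [/\ 0 <= eta t, 0 <= g t, g (eta t) = t & eta (g t) = t])
    /\ {within [set t : R | 0 <= t], continuous eta}
    /\ {within [set t : R | 0 <= t], continuous g}.

Definition dcontinuous (T : Type) (d : T -> T -> R) (f : T -> T) : Prop :=
  forall x e, 0 < e -> exists2 del, 0 < del & forall y, d x y < del -> d (f x) (f y) < e.

Definition dhomeo (T : Type) (d : T -> T -> R) (f : T -> T) : Prop :=
  exists g : T -> T, [/\ cancel f g, cancel g f, dcontinuous d f & dcontinuous d g].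

Definition quasisymmetric (T : Type) (d : T -> T -> R) (eta : R -> R) (f : T -> T) : Prop :=
  forall x y z : T, x <> y -> x <> z -> y <> z ->
    d (f x) (f y) / d (f x) (f z) <= eta (d x y / d x z).

Definition quasisimilarity (T : Type) (d : T -> T -> R) (K C : R) (f : T -> T) : Prop :=
  bijective f /\
  forall a b : T, C / K * d a b <= d (f a) (f b) /\ d (f a) (f b) <= C * K * d a b.

End Defs.

(* Main.v *)
Require Import Defs.
From HB Require Import structures.
From mathcomp Require Import all_boot all_order all_algebra.
From mathcomp Require Import all_classical all_reals all_analysis.
From mathcomp Require Import ring lra.
Import Order.TTheory GRing.Theory Num.Theory.
Local Open Scope ring_scope.

Section S.
Variable R : realType.

Lemma enorm_ge0 m (v : 'rV[R]_m) : 0 <= enorm v.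
Proof. exact: sqrtr_ge0. Qed.

Lemma enorm0 m : enorm (0 : 'rV[R]_m) = 0.
Proof. rewrite /enorm big1 ?sqrtr0 // => j _; by rewrite mxE expr0n. Qed.

Lemma enormN m (v : 'rV[R]_m) : enorm (- v) = enorm v.
Proof. rewrite /enorm; congr Num.sqrt; apply: eq_bigr => j _; by rewrite mxE sqrrN. Qed.

Lemma enorm_eq0 m (v : 'rV[R]_m) : enorm v = 0 -> v = 0.
Proof.
move/eqP; rewrite sqrtr_eq0 => h.
have h0 : \sum_(j < m) v 0 j ^+ 2 = 0.
  by apply: le_anti; rewrite h /=; apply: sumr_ge0 => j _; exact: sqr_ge0.
move/psumr_eq0P: h0 => h1.
apply/matrixP => i j; rewrite ord1 mxE.
have /eqP := h1 (fun i _ => sqr_ge0 _) j isT; by rewrite sqrf_eq0 => /eqP.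
Qed.

Definition bumpv m (c : R) : 'rV[R]_m := \row_(j < m) (if (j == 0%N :> nat) then c else 0).

Lemma enorm_bumpv m c : (0 < m)%N -> enorm (bumpv m c) = `|c|.
Proof.
case: m => [//|m] _; rewrite /enorm big_ord_recl big1 ?addr0.
  by rewrite mxE /= sqrtr_sqr.
by move=> j _; rewrite mxE /= expr0n.
Qed.

Section D.
Variables (r : nat) (ns : nat -> nat) (alpha : nat -> R).
Hypothesis apos : forall i : 'I_r, 0 < alpha i.

Lemma Dist_ge0 (a b : Pt R r ns) : 0 <= Dist alpha a b.
Proof.
rewrite /Dist; elim/big_ind: _ => //; first by move=> x y hx hy; rewrite le_max hx.
move=> i _; exact: powR_ge0.
Qed.

Lemma Dist_self (a : Pt R r ns) : Dist alpha a a = 0.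
Proof.
rewrite /Dist; elim/big_ind: _ => //; first by move=> x y -> ->; rewrite maxxx.
move=> i _; rewrite subrr enorm0 powR0 //.
by rewrite mulf_neq0 // ?invr_eq0 gt_eqF ?(apos i) //; case: r apos i => [|r'] h i; [case: i|exact: (h ord0)].
Qed.

Lemma Dist_gt0 (a b : Pt R r ns) : a <> b -> 0 < Dist alpha a b.
Proof.
move=> ab.
have [i hi] : exists i, a i <> b i.
  apply: contra_notP ab => h; apply: functional_extensionality_dep => i.
  by apply: contra_notP h => hi; exists i.
apply: lt_le_trans (le_bigmax _ _ i).
apply: powR_gt0; rewrite lt_neqAle enorm_ge0 andbT eq_sym; apply/eqP => /enorm_eq0/eqP.
by rewrite subr_eq0 => /eqP.
Qed.

Lemma Dist_leaf (i0 : 'I_r) (a b : Pt R r ns) : nat_of_ord i0 = 0%N -> tail a = tail b ->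
  Dist alpha a b = enorm (a i0 - b i0).
Proof.
move=> hi0 ht.
have oth : forall i : 'I_r, i != i0 -> a i = b i.
  case=> [[|k] hk] hne.
    by exfalso; move/eqP: hne; apply; apply: val_inj; rewrite /= hi0.
  have hk' : (k < r.-1)%N by move: (hk); case: (r).
  have E := congr1 (fun t => t (Ordinal hk')) ht; rewrite /tail /= in E.
  by move: E; rewrite (bool_irrelevance (ltn_tail (Ordinal hk')) hk).
have e0 : enorm (a i0 - b i0) `^ (alpha 0%N / alpha i0) = enorm (a i0 - b i0).
  rewrite (_ : alpha i0 = alpha 0%N); last by rewrite hi0.
  by rewrite divff ?gt_eqF // ?powRr1 ?enorm_ge0 // -hi0 apos.
apply: le_anti; apply/andP; split.
  rewrite /Dist; apply: bigmax_le; first exact: enorm_ge0.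
  move=> i _; case: (eqVneq i i0) => [->|ne]; first by rewrite e0.
  by rewrite oth // subrr enorm0 powR0 ?enorm_ge0 // mulf_neq0 // ?invr_eq0 gt_eqF ?apos //; rewrite -hi0 apos.
by rewrite -{1}e0; apply: le_bigmax.
Qed.

End D.
End S.

Arguments bumpv {R} m c.
Arguments Dist_leaf {R r ns alpha} apos i0 {a b}.
Arguments Dist_gt0 {R r ns alpha a b}.
Arguments Dist_self {R r ns alpha} apos a.
Arguments enorm_ge0 {R m} v.

Lemma bumpv0 (R : realType) m : bumpv m (0 : R) = 0.
Proof. by apply/matrixP => i j; rewrite !mxE; case: ifP. Qed.

Theorem lemma4p7 (R : realType) (r : nat) (ns : nat -> nat) (alpha : nat -> R)
  (hr : (2 <= r)%N)
  (hns : forall i, (i < r)%N -> (1 <= ns i)%N)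
  (halpha0 : 0 < alpha 0%N)
  (halpha : forall i j, (i < j)%N -> (j < r)%N -> alpha i < alpha j)
  (eta : R -> R) (heta : homeo_halfline eta)
  (F : Pt R r ns -> Pt R r ns)
  (hFh : dhomeo (Dist alpha) F)
  (hFq : quasisymmetric (Dist alpha) eta F)
  (H : 'rV[R]_(ns 0%N) -> Ypt R r ns -> 'rV[R]_(ns 0%N))
  (G : Ypt R r ns -> Ypt R r ns)
  (hFH : forall p : Pt R r ns,
     F p (Ordinal (ltnW hr)) = H (p (Ordinal (ltnW hr))) (tail p))
  (hFG : forall p : Pt R r ns, tail (F p) = G (tail p))
  (K C : R) (hK : 1 <= K) (hC : 0 < C)
  (hG : quasisimilarity (DistY alpha) K C G)
  (hH : forall y : Ypt R r ns,
     quasisimilarity (fun u v : 'rV[R]_(ns 0%N) => enorm (u - v)) K C (fun x => H x y))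
  (t1 : R) (ht1 : 0 <= t1) (hetat1 : eta t1 = 1) :
  quasisimilarity (Dist alpha) (eta 1 / t1 * K) C F.
Proof.
set i0 : 'I_r := Ordinal (ltnW hr).
have apos : forall i : 'I_r, 0 < alpha i.
  case=> [[|k] hk] //=; exact: lt_trans halpha0 (halpha 0%N k.+1 _ hk).
have hK0 : 0 < K by apply: lt_le_trans hK.
have ns0 : (0 < ns 0%N)%N by apply: hns; apply: ltnW.
pose wpt (p : Pt R r ns) (c : R) : Pt R r ns :=
  fun i => p i + bumpv (ns i) (if nat_of_ord i == 0%N then c else 0).
have wtail : forall p c, tail (wpt p c) = tail p.
  move=> p c; apply: functional_extensionality_dep => j.
  by rewrite /tail /wpt /= bumpv0 addr0.
have wfacts : forall p c, Dist alpha p (wpt p c) = `|c| /\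
    C / K * `|c| <= Dist alpha (F p) (F (wpt p c)) <= C * K * `|c|.
  move=> p c.
  have e1 : enorm (p i0 - wpt p c i0) = `|c|.
    by rewrite /wpt /= opprD addNKr enormN enorm_bumpv.
  have d1 : Dist alpha p (wpt p c) = `|c|.
    by rewrite (Dist_leaf apos i0) // wtail.
  split => //.
  rewrite (Dist_leaf apos i0) //; last by rewrite !hFG wtail.
  rewrite !hFH wtail -e1.
  have [_ hb] := hH (tail p).
  by have [h1 h2] := hb (p i0) (wpt p c i0); rewrite h1 h2.
have leaf : forall p q (s : R), 0 < s -> exists w, [/\ w <> p, w <> q, Dist alpha p w = s &
    C / K * s <= Dist alpha (F p) (F w) <= C * K * s].
  move=> p q s s0.
  have w12 : wpt p s <> wpt p (- s).
    move=> E; have := congr1 (fun t : Pt R r ns => (t i0 : 'rV_(ns 0%N)) 0 (Ordinal ns0)) E.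
    rewrite /wpt /= !mxE /= => /addrI; lra.
  have good : forall c, `|c| = s -> wpt p c <> q -> exists w, [/\ w <> p, w <> q,
      Dist alpha p w = s & C / K * s <= Dist alpha (F p) (F w) <= C * K * s].
    move=> c hc hq; have [d1 d2] := wfacts p c; exists (wpt p c); split; rewrite -?hc //.
    move=> E; move: d1; rewrite E (Dist_self apos) hc => E2.
    by move: s0; rewrite -E2 ltxx.
  case: (pselect (wpt p s = q)) => hq.
    by apply: (good (-s)); [rewrite normrN gtr0_norm | rewrite -hq => /esym].
  by apply: (good s) => //; rewrite gtr0_norm.
have Fpos : forall p w, C / K * Dist alpha p w <= Dist alpha (F p) (F w) -> p <> w ->
    0 < Dist alpha (F p) (F w).
  move=> p w h pw; apply: lt_le_trans h; apply: mulr_gt0; first exact: divr_gt0.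
  exact: Dist_gt0.
pose p0 : Pt R r ns := fun i => 0.
have eta1 : 1 <= eta 1.
  have [w1 [h1 _ d1 b1]] := leaf p0 p0 1 ltr01.
  have [w2 [h2 h21 d2 b2]] := leaf p0 w1 1 ltr01.
  have a0 : 0 < Dist alpha (F p0) (F w1).
    by apply: Fpos (nesym h1); rewrite d1; case/andP: b1.
  have b0 : 0 < Dist alpha (F p0) (F w2).
    by apply: Fpos (nesym h2); rewrite d2; case/andP: b2.
  have q1 := hFq p0 w1 w2 (nesym h1) (nesym h2) (nesym h21).
  have q2 := hFq p0 w2 w1 (nesym h2) (nesym h1) h21.
  rewrite d1 d2 divr1 in q1 q2.
  case: (leP (Dist alpha (F p0) (F w1)) (Dist alpha (F p0) (F w2))) => hab.
    by apply: (le_trans _ q2); rewrite (ler_pdivlMr _ _ a0) mul1r.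
  by apply: (le_trans _ q1); rewrite (ler_pdivlMr _ _ b0) mul1r; apply: ltW.
have t1pos : 0 < t1.
  rewrite lt_neqAle ht1 andbT; apply/eqP => E; rewrite -E in hetat1.
  case: heta => g [hg _]; have [_ g0 _ eg0] := hg 0 (lexx 0).
  have gpos : 0 < g 0.
    rewrite lt_neqAle g0 andbT; apply/eqP => E2; move: eg0; rewrite -E2 hetat1.
    by move=> /eqP; rewrite oner_eq0.
  have [w1 [h1 _ d1 b1]] := leaf p0 p0 (g 0) gpos.
  have [w2 [h2 h21 d2 b2]] := leaf p0 w1 1 ltr01.
  have a0 : 0 < Dist alpha (F p0) (F w1).
    by apply: Fpos (nesym h1); rewrite d1; case/andP: b1.
  have b0 : 0 < Dist alpha (F p0) (F w2).
    by apply: Fpos (nesym h2); rewrite d2; case/andP: b2.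
  have q1 := hFq p0 w1 w2 (nesym h1) (nesym h2) (nesym h21).
  rewrite d1 d2 divr1 eg0 in q1.
  by move: q1; rewrite leNgt (divr_gt0 a0 b0).
have eta0 : 0 < eta 1 by apply: lt_le_trans eta1; exact: ltr01.
have t1n : t1 != 0 by rewrite gt_eqF.
have Kn : K != 0 by rewrite gt_eqF.
have etan : eta 1 != 0 by rewrite gt_eqF.
case: hFh => g [fK gK _ _].
split; first by exists g.
move=> a b.
case: (pselect (a = b)) => [<-|ab].
  rewrite !(Dist_self apos) !mulr0; split; exact: lexx.
have d0 : 0 < Dist alpha a b by exact: Dist_gt0.
have Fab : F a <> F b by move=> E; apply: ab; rewrite -(fK a) E fK.
have Fd0 : 0 < Dist alpha (F a) (F b) by exact: Dist_gt0.
have dn : Dist alpha a b != 0 by rewrite (gt_eqF d0).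
split.
  have [w [hwa hwb dw bw]] := leaf a b (t1 * Dist alpha a b) (mulr_gt0 t1pos d0).
  have q1 := hFq a w b (nesym hwa) ab hwb.
  rewrite dw (mulrK (unitf_gt0 d0)) hetat1 (ler_pdivrMr _ _ Fd0) mul1r in q1.
  apply: (le_trans _ q1); case/andP: bw => bw _; apply: (le_trans _ bw).
  have -> : C / (eta 1 / t1 * K) * Dist alpha a b = (C / K * (t1 * Dist alpha a b)) / eta 1.
    by field; rewrite etan t1n Kn.
  rewrite (ler_pdivrMr _ _ eta0).
  apply: ler_peMr => //; apply: mulr_ge0; first exact: ltW (divr_gt0 hC hK0).
  exact: ltW (mulr_gt0 t1pos d0).
have [w [hwa hwb dw bw]] := leaf a b (Dist alpha a b / t1) (divr_gt0 d0 t1pos).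
have Fw0 : 0 < Dist alpha (F a) (F w).
  by apply: Fpos (nesym hwa); rewrite dw; case/andP: bw.
have q1 := hFq a b w ab (nesym hwa) (nesym hwb).
have ee : Dist alpha a b / (Dist alpha a b / t1) = t1 by field; rewrite dn t1n.
rewrite dw ee hetat1 (ler_pdivrMr _ _ Fw0) mul1r in q1.
apply: (le_trans q1); apply: le_trans (_ : C * K * (Dist alpha a b / t1) <= _).
  by case/andP: bw.
have -> : C * (eta 1 / t1 * K) * Dist alpha a b = C * K * (Dist alpha a b / t1) * eta 1.
  by field.
apply: ler_peMr => //; apply: mulr_ge0; first exact: ltW (mulr_gt0 hC hK0).
exact: ltW (divr_gt0 d0 t1pos).
Qed.
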